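(* Let $X_1,\dots,X_n$ be i.i.d. real random variables whose common distribution is symmetric about an unknown $\mu\in\mathbb{R}$. Fix integers $k\le n$ and $1\le r\le m$, let $R(\theta)$ be the one-sided resampled median-of-means rank defined in the context (with the same random signs and permutation used for all $\theta$), and let $\Theta_n=\{\theta\in\mathbb{R}: R(\theta)\le m-r\}$. Then $$\mathbb{P}(\mu\in\Theta_n)=1-\frac{r}{m}.$$
   Context: Blocks: for $\ell=1,\dots,k$ let $B_\ell=\{i\in[n]: i\equiv \ell \pmod k\}$. Median: for reals $y_1,\dots,y_k$ with order statistics $y_{(1)}\le\dots\le y_{(k)}$, $\mathrm{med}(y_1,\dots,y_k)=y_{(k/2)}$ if $k$ is even and $y_{(\lfloor k/2\rfloor+1)}$ if $k$ is odd. Median-of-means: $\widehat\mu(x_1,\dots,x_n)=\mathrm{med}\big(\frac{1}{|B_1|}\sum_{i\in B_1}x_i,\dots,\frac{1}{|B_k|}\sum_{i\in B_k}x_i\big)$. Randomization: $\{\alpha_{i,j}\}_{i\in[n],j\in[m-1]}$ i.i.d. Rademacher signs independent of the data; $\pi$ a uniformly random permutation of $\{0,\dots,m-1\}$ independent of data and signs. For $\theta\in\mathbb{R}$: $\mathcal{D}_0(\theta)=(X_1,\dots,X_n)$, $\mathcal{D}_j(\theta)=(\alpha_{1,j}(X_1-\theta)+\theta,\dots,\alpha_{n,j}(X_n-\theta)+\theta)$ for $j\in[m-1]$; $S_j(\theta)=\widehat\mu(\mathcal{D}_j(\theta))-\theta$ for $j=0,\dots,m-1$. $S_j(\theta)\prec_\pi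 S_l(\theta)$ iff $S_j(\theta)<S_l(\theta)$, or $S_j(\theta)=S_l(\theta)$ and $\pi(j)<\pi(l)$. $R(\theta)=1+\sum_{j=1}^{m-1}\mathbb{I}\big(S_0(\theta)\prec_\pi S_j(\theta)\big)$. *)

(* Defs.v *)
From HB Require Import structures.
From mathcomp Require Import all_boot all_order all_algebra all_fingroup.
From mathcomp Require Import all_classical all_reals all_analysis.

Import Order.TTheory GRing.Theory Num.Theory.
Local Open Scope ring_scope.

(* Indices i in [n] are represented by i' : 'I_n with i = i'+1;
   blocks l in [k] by l' : 'I_k with l = l'+1. *)

(* median of a finite sequence of reals: y_(k/2) if k even,
   y_(floor(k/2)+1) if k odd (order statistics, 1-indexed). *)
Definition med {R : realType} (s : seq R) : R :=
  let k := size s in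
  nth 0 (sort <=%R s) (if odd k then k./2 else (k./2).-1).

Definition block {n k : nat} (l : 'I_k) : pred 'I_n :=
  fun i => (i.+1 %% k == l.+1 %% k)%N.

Definition block_mean {R : realType} {n k : nat} (x : 'I_n -> R) (l : 'I_k) : R :=
  (\sum_(i | block l i) x i) / (#|block (n:=n) l|)%:R.

Definition mom {R : realType} {n : nat} (k : nat) (x : 'I_n -> R) : R :=
  med [seq block_mean x l | l <- enum 'I_k].

Definition sgn {R : realType} (b : bool) : R := if b then 1 else -1.

(* alpha_{i,j} for j >= 1 (stored at index j-1); default irrelevant *)
Definition sign_at {n m : nat} (alpha : {ffun 'I_n * 'I_(m.-1) -> bool})
  (i : 'I_n) (j : nat) : bool :=
  match (insub j.-1 : option 'I_(m.-1)) with
  | Some j' => alpha (i, j')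
  | None => true
  end.

Definition resample {R : realType} {n m : nat} (x : 'I_n -> R)
  (alpha : {ffun 'I_n * 'I_(m.-1) -> bool}) (theta : R) (j : 'I_m) : 'I_n -> R :=
  fun i => if (j == 0 :> nat) then x i
           else sgn (sign_at alpha i j) * (x i - theta) + theta.

Definition Sstat {R : realType} {n : nat} (k : nat) {m : nat} (x : 'I_n -> R)
  (alpha : {ffun 'I_n * 'I_(m.-1) -> bool}) (theta : R) (j : 'I_m) : R :=
  mom k (resample x alpha theta j) - theta.

Definition prec_pi {R : realType} {m : nat} (pi : {perm 'I_m}) (S : 'I_m -> R)
  (j l : 'I_m) : bool :=
  (S j < S l) || ((S j == S l) && (pi j < pi l)%N).

Definition rankR {R : realType} {n : nat} (k : nat) {m : nat} (x : 'I_n -> R)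
  (alpha : {ffun 'I_n * 'I_(m.-1) -> bool}) (pi : {perm 'I_m}) (theta : R) : nat :=
  match m as m0 return ({ffun 'I_n * 'I_(m0.-1) -> bool} -> {perm 'I_m0} -> nat) with
  | 0 => fun _ _ => 1
  | m'.+1 => fun alpha pi =>
      (1 + #|[pred j : 'I_m'.+1 | (0 < j)%N &&
              prec_pi pi (Sstat k x alpha theta) ord0 j]|)%N
  end alpha pi.

(* Main.v *)
Require Import Defs.
From HB Require Import structures.
From mathcomp Require Import all_boot all_order all_algebra all_fingroup.
From mathcomp Require Import all_classical all_reals all_analysis.
From mathcomp Require Import measurable_realfun.
Import Order.TTheory GRing.Theory Num.Theory.
Local Open Scope classical_set_scope.
Local Open Scope ring_scope.
Section gen.
Context d (T : measurableType d) (R : realType).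

Lemma bool_comb_measurable (I : finType) (b : I -> T -> bool)
   (F : {ffun I -> bool} -> bool) :
  (forall i, measurable [set t | b i t]) ->
  measurable [set t | F [ffun i => b i t]].
Proof.
move=> mb.
have -> : [set t | F [ffun i => b i t]] =
  \bigcup_(g in [set g | F g]) \bigcap_(i in [set: I]) [set t | b i t = g i].
  apply/seteqP; split => t /=.
    move=> Ft; exists [ffun i => b i t] => //= i _; by rewrite ffunE.
  move=> [g Fg H]; suff -> : [ffun i => b i t] = g by [].
  by apply/ffunP => i; rewrite ffunE H.
apply: fin_bigcup_measurable; first exact: finite_finset.
move=> g _; apply: fin_bigcap_measurable; first exact: finite_finset.
move=> i _; case: (g i).
  have -> : [set t | b i t = true] = [set t | b i t] by [].
  exact: mb.
have -> : [set t | b i t = false] = ~` [set t | b i t].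
  by apply/seteqP; split => t /=; [move->|move/negP/negbTE].
exact: measurableC.
Qed.

Lemma fin_decomp (mu : probability T R) (K : finType) (f : T -> K) (E : set T) :
  measurable E -> (forall a, measurable (f @^-1` [set a])) ->
  mu E = (\sum_(a : K) mu (E `&` f @^-1` [set a]))%E.
Proof.
move=> mE mf.
have HE : E = \bigcup_(a in [set: K]) (E `&` f @^-1` [set a]).
  apply/seteqP; split => t /=; first by move=> Et; exists (f t).
  by move=> [a _ []].
rewrite [in LHS]HE measure_fin_bigcup //; last first.
- by move=> a _; apply: measurableI.
- apply/trivIsetP => a b _ _ ab; apply/seteqP; split => // t [[_ fa] [_ fb]].
  by move: ab; rewrite -fa -fb eqxx.
- exact: finite_finset.
have -> : [set: K] = [set` enum K].
  by apply/seteqP; split => a //= _; rewrite mem_enum.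
by rewrite -fsbig_seq ?enum_uniq // big_enum /=.
Qed.


Lemma sorted_nth_lt (s : seq R) i (c : R) :
  sorted <=%R s -> (i < size s)%N ->
  (nth 0 s i < c) = (i < count (fun y : R => (y < c)%R) s)%N.
Proof.
elim: s i => [//|x s IH] i /= Hs Hi.
have Hall : all (fun y => x <= y) s.
  by apply: order_path_min => //; exact: le_trans.
case: i Hi => [|i] Hi /=.
  case: ltP => xc //=.
  have -> : count (fun y => y < c) s = 0%N.
    apply/eqP; rewrite -leqn0 leqNgt -has_count; apply/negP => /hasP [y ys yc].
    by move/allP: Hall => /(_ y ys) xy; move: xc; rewrite leNgt (le_lt_trans xy yc).
  by [].
have Hs' : sorted <=%R s by apply: path_sorted Hs.
rewrite IH //; case: ltP => xc /=.
  by rewrite add1n ltnS.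
have -> : count (fun y => y < c) s = 0%N.
  apply/eqP; rewrite -leqn0 leqNgt -has_count; apply/negP => /hasP [y ys yc].
  by move/allP: Hall => /(_ y ys) xy; move: xc; rewrite leNgt (le_lt_trans xy yc).
by [].
Qed.

Lemma nth_sort_lt (s : seq R) i (c : R) :
  (i < size s)%N ->
  (nth 0 (sort <=%R s) i < c) = (i < count (fun y : R => (y < c)%R) s)%N.
Proof.
move=> Hi; rewrite sorted_nth_lt ?size_sort //; last first.
  by apply: sort_sorted => x y; exact: le_total.
have H : perm_eq (sort <=%R s) s by rewrite perm_sort.
by rewrite (elimT seq.permP H).
Qed.

Lemma lt_measurable (g : T -> R) (x : R) :
  measurable_fun setT g -> measurable [set t | g t < x].
Proof.
move=> mg; have := mg measurableT `]-oo, x[%classic (measurable_itv _).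
rewrite setTI; congr measurable; apply/seteqP; split => t /=; by rewrite in_itv /=.
Qed.

Lemma measurable_nth_sort (k : nat) (f : 'I_k -> T -> R) i :
  (forall l, measurable_fun setT (f l)) ->
  measurable_fun setT (fun t => nth 0 (sort <=%R [seq f l t | l <- enum 'I_k]) i).
Proof.
move=> mf; case: (ltnP i k) => ik; last first.
  rewrite (_ : (fun t => _) = cst 0); first exact: measurable_cst.
  by apply/funext => t; rewrite nth_default // size_sort size_map size_enum_ord.
apply: (measurability _ (RGenInftyO.measurableE R)) => //.
move=> _ [_ [x ->] <-].
have -> : setT `&` (fun t => nth 0 (sort <=%R [seq f l t | l <- enum 'I_k]) i) @^-1` `]-oo, x[%classic
   = [set t | (fun g : {ffun 'I_k -> bool} => (i < count g (enum 'I_k))%N) [ffun l => f l t < x]].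
  have Ec t : count (fun l => [ffun l => f l t < x] l) (enum 'I_k) =
     count (fun y => y < x) [seq f l t | l <- enum 'I_k].
    by rewrite [RHS]count_map; apply: eq_count => l; rewrite ffunE.
  apply/seteqP; split => t /=.
    move=> [_]; rewrite in_itv /= nth_sort_lt; last by rewrite size_map size_enum_ord.
    by rewrite -Ec.
  move=> H; split => //; rewrite in_itv /= nth_sort_lt; last by rewrite size_map size_enum_ord.
  by rewrite -Ec.
apply: (@bool_comb_measurable _ (fun l t => f l t < x) (fun g => (i < count g (enum 'I_k))%N)).
move=> l; exact: lt_measurable.
Qed.

End gen.

Section V.
Variables (R : realType) (n m' : nat).
Definition Fa := {ffun 'I_n * 'I_m' -> bool}.
Definition Pm := {perm 'I_m'.+1}.
Definition Vc := (('I_n -> R) * (Fa * Pm))%type.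
HB.instance Definition _ := gen_eqMixin Vc.
HB.instance Definition _ := gen_choiceMixin Vc.
HB.instance Definition _ := isPointed.Build Vc (fun _ => 0, ([ffun => true], 1%g)).

Definition rect (B : 'I_n -> set R) (A : set Fa) (S : set Pm) : set Vc :=
  [set v | (forall i, B i (v.1 i)) /\ A v.2.1 /\ S v.2.2].
Definition Grect : set (set Vc) :=
  [set E | exists B A S, (forall i, measurable (B i)) /\ E = rect B A S].
Definition Vt := g_sigma_algebraType Grect.

Lemma rect_meas B A S : (forall i, measurable (B i)) -> measurable (rect B A S : set Vt).
Proof. by move=> mB; apply: sub_sigma_algebra; exists B, A, S. Qed.

Lemma coord_meas i : measurable_fun setT (fun v : Vt => v.1 i).
Proof.
move=> _ B mB; rewrite setTI.
have -> : (fun v : Vt => v.1 i) @^-1` B = rect (fun i' => if i' == i then B else setT) setT setT.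
  apply/seteqP; split => v /=.
    move=> Bv; split => // i'; case: eqP => [->|] //.
  by move=> [/(_ i)]; rewrite eqxx.
by apply: rect_meas => i'; case: eqP.
Qed.

Lemma bool_meas (b : Vt -> bool) : measurable_fun setT b -> measurable [set v | b v].
Proof.
move=> mb; have := mb measurableT [set true] I; rewrite setTI.
by congr measurable; apply/seteqP; split => v /=.
Qed.

Variables (k : nat) (mu : R).

Lemma resample_meas (a0 : Fa) (j : 'I_m'.+1) i :
  measurable_fun setT (fun v : Vt => @resample R n m'.+1 v.1 a0 mu j i).
Proof.
rewrite /resample; case: (j == 0 :> nat); first exact: coord_meas.
apply: measurable_funD; last exact: measurable_cst.
apply: measurable_funM; first exact: measurable_cst.
apply: measurable_funB; [exact: coord_meas | exact: measurable_cst].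
Qed.

Lemma Sstat_meas (a0 : Fa) (j : 'I_m'.+1) :
  measurable_fun setT (fun v : Vt => @Sstat R n k m'.+1 v.1 a0 mu j).
Proof.
rewrite /Sstat /mom /med.
have -> : (fun v : Vt => nth 0 (sort <=%R [seq block_mean (@resample R n m'.+1 v.1 a0 mu j) l | l <- enum 'I_k])
    (if odd (size [seq block_mean (@resample R n m'.+1 v.1 a0 mu j) l | l <- enum 'I_k])
     then (size [seq block_mean (@resample R n m'.+1 v.1 a0 mu j) l | l <- enum 'I_k])./2
     else ((size [seq block_mean (@resample R n m'.+1 v.1 a0 mu j) l | l <- enum 'I_k])./2).-1) - mu)
  = (fun v : Vt => nth 0 (sort <=%R [seq block_mean (@resample R n m'.+1 v.1 a0 mu j) l | l <- enum 'I_k])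
    (if odd k then k./2 else (k./2).-1) - mu).
  by apply/funext => v; rewrite size_map size_enum_ord.
apply: measurable_funB; last exact: measurable_cst.
apply: (@measurable_nth_sort _ Vt R k (fun l (v : Vt) => block_mean (@resample R n m'.+1 v.1 a0 mu j) l)).
move=> l; rewrite /block_mean.
apply: measurable_funM; last exact: measurable_cst.
have -> : (fun v : Vt => \sum_(i | block l i) @resample R n m'.+1 v.1 a0 mu j i) =
   (fun v : Vt => \sum_(i <- index_enum 'I_n) (if block l i then @resample R n m'.+1 v.1 a0 mu j i else 0)).
  by apply/funext => v; rewrite big_mkcond.
apply: measurable_sum => i; case: (block l i); first exact: resample_meas.
exact: measurable_cst.
Qed.


Definition rk {M : nat} (S : 'I_M -> R) (s : {perm 'I_M}) (c : 'I_M) : nat :=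
  (1 + #|[pred j | (j != c) && prec_pi s S c j]|)%N.

Lemma rk_meas (c : 'I_m'.+1) (Q : pred nat) :
  measurable [set v : Vt | Q (rk (@Sstat R n k m'.+1 v.1 v.2.1 mu) v.2.2 c)].
Proof.
have -> : [set v : Vt | Q (rk (@Sstat R n k m'.+1 v.1 v.2.1 mu) v.2.2 c)] =
  \bigcup_(a0 in [set: Fa]) \bigcup_(s0 in [set: Pm])
     (rect (fun _ => setT) [set a0] [set s0] `&`
      [set v : Vt | Q (rk (@Sstat R n k m'.+1 v.1 a0 mu) s0 c)]).
  apply/seteqP; split => v /=.
    by move=> Hv; exists v.2.1 => //; exists v.2.2.
  by move=> [a0 _ [s0 _ [[_ [-> ->]] Hv]]].
apply: fin_bigcup_measurable; first exact: finite_finset.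
move=> a0 _; apply: fin_bigcup_measurable; first exact: finite_finset.
move=> s0 _; apply: measurableI; first by apply: rect_meas.
pose b (p : 'I_m'.+1 * bool) (v : Vt) :=
  if p.2 then @Sstat R n k m'.+1 v.1 a0 mu c < @Sstat R n k m'.+1 v.1 a0 mu p.1
  else @Sstat R n k m'.+1 v.1 a0 mu c == @Sstat R n k m'.+1 v.1 a0 mu p.1.
pose F (g : {ffun 'I_m'.+1 * bool -> bool}) :=
  Q (1 + #|[pred j | (j != c) && (g (j, true) || g (j, false) && (s0 c < s0 j)%N)]|)%N.
have -> : [set v : Vt | Q (rk (@Sstat R n k m'.+1 v.1 a0 mu) s0 c)] =
   [set v : Vt | F [ffun p => b p v]].
  have Hc v : F [ffun p => b p v] = Q (rk (@Sstat R n k m'.+1 v.1 a0 mu) s0 c).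
    rewrite /F /rk; congr (Q (1 + _)%N); apply: eq_card => j. by rewrite !inE !ffunE.
  by apply/seteqP; split => v /=; rewrite Hc.
apply: bool_comb_measurable => -[j []]; apply: bool_meas.
  by apply: measurable_fun_ltr; apply: Sstat_meas.
by apply: measurable_fun_eqr; apply: Sstat_meas.
Qed.

End V.
Arguments rect {R n m'}.
Arguments rk {R M}.

Section Comb.
Variable R : realType.

Lemma card_pred_perm (M : nat) (h : 'I_M -> 'I_M) (Q : pred 'I_M) :
  injective h -> #|[pred j | Q (h j)]| = #|[pred j | Q j]|.
Proof.
move=> hinj; rewrite -!sum1_card [RHS](reindex_inj hinj) /=.
by apply: eq_bigl => j; rewrite !inE.
Qed.

Lemma rk_perm (M : nat) (S : 'I_M -> R) (s sg : {perm 'I_M}) (c : 'I_M) :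
  rk (S \o sg) (sg * s)%g c = rk S s (sg c).
Proof.
rewrite /rk; congr (1 + _)%N.
rewrite -(@card_pred_perm M sg (fun j => (j != sg c) && prec_pi s S (sg c) j) (@perm_inj _ sg)).
apply: eq_card => j; rewrite !inE (inj_eq (@perm_inj _ sg)) /prec_pi /= !permM.
by [].
Qed.

Section order.
Variables (M : nat) (S : 'I_M -> R) (s : {perm 'I_M}).
Notation pr := (prec_pi s S).

Lemma pr_irr c : pr c c = false.
Proof. by rewrite /prec_pi ltxx ltnn andbF. Qed.

Lemma pr_trans a b c : pr a b -> pr b c -> pr a c.
Proof.
rewrite /prec_pi => /orP [ab|/andP [/eqP ab sab]] /orP [bc|/andP [/eqP bc sbc]].
- by rewrite (lt_trans ab bc).
- by rewrite -bc ab.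
- by rewrite ab bc.
- by rewrite ab bc eqxx (ltn_trans sab sbc) orbT.
Qed.

Lemma pr_total a b : a != b -> pr a b || pr b a.
Proof.
move=> ab; rewrite /prec_pi; case: (ltgtP (S a) (S b)) => //= Hab.
have : s a != s b by rewrite (inj_eq (@perm_inj _ s)).
by rewrite neq_ltn.
Qed.

Definition cnt c := #|[pred j | pr c j]|.

Lemma cnt_lt c : (cnt c < M)%N.
Proof.
rewrite /cnt; rewrite -[X in (_ < X)%N](card_ord M); apply: proper_card; apply/properP; split.
  exact: subset_predT.
by exists c => //; rewrite inE pr_irr.
Qed.

Lemma cnt_lt2 a b : pr a b -> (cnt b < cnt a)%N.
Proof.
move=> ab; apply: proper_card; apply/properP; split.
  by apply/fintype.subsetP => j; rewrite !inE => bj; apply: pr_trans ab bj.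
by exists b; rewrite !inE ?pr_irr.
Qed.

Lemma cnt_inj : injective cnt.
Proof.
move=> a b H; apply/eqP; apply: contraT => ab.
case/orP: (pr_total _ _ ab) => /cnt_lt2; by rewrite H ltnn.
Qed.

Lemma rk_cnt c : rk S s c = (cnt c).+1.
Proof.
rewrite /rk add1n /cnt; congr (_.+1); apply: eq_card => j; rewrite !inE.
by case: eqP => // ->; rewrite pr_irr.
Qed.

Lemma card_rk_le q : (q <= M)%N -> #|[pred c | (rk S s c <= q)%N]| = q.
Proof.
move=> qM.
pose f c : 'I_M := Ordinal (cnt_lt c).
have finj : injective f by move=> a b /(congr1 val) /= /cnt_inj.
have -> : #|[pred c | (rk S s c <= q)%N]| = #|[pred c | (f c < q)%N]|.
  by apply: eq_card => c; rewrite !inE rk_cnt.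
rewrite (@card_pred_perm M f (fun i : 'I_M => (i < q)%N) finj).
rewrite -sum1_card.
rewrite (eq_bigl (fun i : 'I_M => (i < q)%N)); last by move=> i; rewrite inE.
by rewrite -(big_ord_widen _ (fun _ => 1%N) qM) sum1_card card_ord.
Qed.

End order.
End Comb.

Section Prob.
Context d (T : measurableType d) (R : realType) (P : probability T R).
Variables (n k m' : nat) (mu : R) (X : 'I_n -> T -> R)
  (alpha : T -> Fa n m') (pi : T -> Pm m').
Hypothesis hX : forall i, measurable_fun setT (X i).
Hypothesis halpha : forall A, measurable (alpha @^-1` A).
Hypothesis hpi : forall S, measurable (pi @^-1` S).
Hypothesis hind : forall (B : 'I_n -> set R) (A : set (Fa n m')) (S : set (Pm m')),
     (forall i, measurable (B i)) ->
     P ((\bigcap_i (X i @^-1` B i)) `&` (alpha @^-1` A) `&` (pi @^-1` S)) =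
     ((\prod_(i < n) P (X i @^-1` B i)) * P (alpha @^-1` A) * P (pi @^-1` S))%E.
Hypothesis hsym : forall i (B : set R), measurable B ->
     P (X i @^-1` B) = P (X i @^-1` ((fun y => 2 * mu - y) @^-1` B)).
Hypothesis hunifA : forall a b, P (alpha @^-1` [set a]) = P (alpha @^-1` [set b]).
Hypothesis hunifP : forall a b, P (pi @^-1` [set a]) = P (pi @^-1` [set b]).

Lemma unif_inv (K : finType) (f : T -> K) (h : K -> K) (A : set K) :
  (forall A, measurable (f @^-1` A)) ->
  (forall a b, P (f @^-1` [set a]) = P (f @^-1` [set b])) ->
  injective h ->
  P (f @^-1` [set x | A (h x)]) = P (f @^-1` A).
Proof.
move=> mf hu hinj.
rewrite (@fin_decomp _ _ _ P _ f) ?(@fin_decomp _ _ _ P _ f (f @^-1` A)) //.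
rewrite [RHS](reindex_inj hinj) /=; apply: eq_bigr => a _.
case: (pselect (A (h a))) => Aa.
  have -> : f @^-1` [set x | A (h x)] `&` f @^-1` [set a] = f @^-1` [set a].
    by apply/seteqP; split => t /=; [case | move=> ->; split].
  have -> : f @^-1` A `&` f @^-1` [set h a] = f @^-1` [set h a].
    by apply/seteqP; split => t /=; [case | move=> ->; split].
  exact: hu.
have -> : f @^-1` [set x | A (h x)] `&` f @^-1` [set a] = set0.
  by apply/seteqP; split => t //= [At fa]; apply: Aa; rewrite -fa.
have -> : f @^-1` A `&` f @^-1` [set h a] = set0.
  by apply/seteqP; split => t //= [At fa]; apply: Aa; rewrite -fa.
by [].
Qed.


Definition flip (b : bool) (y : R) : R := sgn b * (y - mu) + mu.
Definition aswap (c' : 'I_m') (a : Fa n m') : Fa n m' :=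
  [ffun p => if p.2 == c' then a p else (a p == a (p.1, c'))].
Definition sig (c' : 'I_m') : {perm 'I_m'.+1} := tperm ord0 (lift ord0 c').

Definition Y (t : T) : Vt R n m' := ((fun i => X i t), (alpha t, pi t)).
Definition Yp (c' : 'I_m') (t : T) : Vt R n m' :=
  ((fun i => flip (alpha t (i, c')) (X i t)), (aswap c' (alpha t), (sig c' * pi t)%g)).

Lemma aswapK c' : involutive (aswap c').
Proof.
move=> a; apply/ffunP => p; rewrite !ffunE /=.
case: eqP => // _; rewrite eqxx.
by case: (a p); case: (a (p.1, c')).
Qed.

Lemma flip_meas b : measurable_fun setT (flip b).
Proof.
apply: measurable_funD; last exact: measurable_cst.
apply: measurable_funM; first exact: measurable_cst.
apply: measurable_funB; [exact: measurable_id | exact: measurable_cst].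
Qed.

Lemma Xpre_meas i (B : set R) : measurable B -> measurable (X i @^-1` B).
Proof. by move=> mB; rewrite -[X in measurable X]setTI; apply: hX. Qed.

Lemma flipset_meas b (B : set R) : measurable B -> measurable [set y | B (flip b y)].
Proof.
move=> mB; have := flip_meas b measurableT B mB; rewrite setTI; by [].
Qed.

Lemma Y_rect B A S :
  Y @^-1` rect B A S = (\bigcap_i (X i @^-1` B i)) `&` (alpha @^-1` A) `&` (pi @^-1` S).
Proof.
apply/seteqP; split => t /=.
  by move=> [HB [HA HS]]; split => //; split => // i _; apply: HB.
by move=> [[HB HA] HS]; split => //; move=> i; apply: HB.
Qed.

Definition flipB (c' : 'I_m') (B : 'I_n -> set R) (a : Fa n m') (i : 'I_n) : set R :=
  [set y | B i (flip (a (i, c')) y)].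

Lemma Yp_rect c' B A S a :
  Yp c' @^-1` rect B A S `&` alpha @^-1` [set a] =
  (\bigcap_i (X i @^-1` flipB c' B a i)) `&`
     (alpha @^-1` ([set a] `&` [set b | A (aswap c' b)])) `&`
     (pi @^-1` [set s | S (sig c' * s)%g]).
Proof.
apply/seteqP; split => t /=.
  move=> [[HB [HA HS]] <-]; split => //; split => // i _; apply: HB.
move=> [[HB [Ha HA]] HS]; subst a; split => //; split => // i; exact: (HB i I).
Qed.

Lemma Y_meas : measurable_fun setT Y.
Proof.
apply: (@measurability _ _ T (Vt R n m') setT _ (Grect R n m')) => //.
move=> _ [_ [B [A [S [mB ->]]]] <-].
rewrite setTI Y_rect; apply: measurableI => //; apply: measurableI => //.
apply: fin_bigcap_measurable; first exact: finite_finset.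
by move=> i _; apply: Xpre_meas.
Qed.

Lemma Yp_meas c' : measurable_fun setT (Yp c').
Proof.
apply: (@measurability _ _ T (Vt R n m') setT _ (Grect R n m')) => //.
move=> _ [_ [B [A [S [mB ->]]]] <-].
rewrite setTI.
have -> : Yp c' @^-1` rect B A S = \bigcup_(a in [set: Fa n m']) (Yp c' @^-1` rect B A S `&` alpha @^-1` [set a]).
  by apply/seteqP; split => t /=; [move=> H; exists (alpha t) | move=> [a _ []]].
apply: fin_bigcup_measurable; first exact: finite_finset.
move=> a _; rewrite Yp_rect; apply: measurableI => //; apply: measurableI => //.
apply: fin_bigcap_measurable; first exact: finite_finset.
by move=> i _; apply: Xpre_meas; apply: flipset_meas.
Qed.


Lemma flip_sym i b (B : set R) : measurable B ->
  P (X i @^-1` [set y | B (flip b y)]) = P (X i @^-1` B).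
Proof.
move=> mB; case: b.
  congr (P _); apply/seteqP; split => t /=; by rewrite /flip /sgn mul1r subrK.
have E y : mu - y + mu = 2 * mu - y by rewrite mulr_natl mulr2n addrAC.
rewrite (hsym i B mB); congr (P _); apply/seteqP; split => t /=;
  by rewrite /flip /sgn mulN1r opprB E.
Qed.

Lemma rect_eq c' B A S : (forall i, measurable (B i)) ->
  P (Y @^-1` rect B A S) = P (Yp c' @^-1` rect B A S).
Proof.
move=> mB; rewrite Y_rect hind //.
have mYp : measurable (Yp c' @^-1` rect B A S).
  rewrite -[X in measurable X]setTI; apply: (Yp_meas c') => //; exact: rect_meas.
rewrite (@fin_decomp _ _ _ P _ alpha _ mYp (fun a => halpha [set a])).
under [RHS]eq_bigr => a _.
  rewrite Yp_rect hind; last by move=> i; apply: flipset_meas.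
  under eq_bigr => i _ do rewrite /flipB flip_sym //.
  over.
rewrite /=.
rewrite -ge0_sume_distrl; last by move=> a _; apply: mule_ge0; [apply: prode_ge0 => i _|]; apply: measure_ge0.
rewrite -ge0_sume_distrr; last by move=> a _; apply: measure_ge0.
have -> : (\sum_(a : Fa n m') P (alpha @^-1` ([set a] `&` [set b | A (aswap c' b)])))%E =
   P (alpha @^-1` [set b | A (aswap c' b)]).
  rewrite [RHS](@fin_decomp _ _ _ P _ alpha) //; apply: eq_bigr => a _; congr (P _).
  by apply/seteqP; split => t /=; move=> [? ?].
rewrite (@unif_inv _ alpha (aswap c')) //; last exact: (inv_inj (aswapK c')).
rewrite (@unif_inv _ pi (mulg (sig c'))) //; exact: mulgI.
Qed.


Lemma law_eq c' (E : set (Vt R n m')) : measurable E ->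
  P (Y @^-1` E) = P (Yp c' @^-1` E).
Proof.
move=> mE.
have setIG : setI_closed (Grect R n m').
  move=> _ _ [B [A [S [mB ->]]]] [B' [A' [S' [mB' ->]]]].
  exists (fun i => B i `&` B' i), (A `&` A'), (S `&` S'); split.
    by move=> i; apply: measurableI.
  apply/seteqP; split => v /=.
    by move=> [[HB [HA HS]] [HB' [HA' HS']]]; split => //; move=> i; split.
  by move=> [HB [[HA HA'] [HS HS']]]; split; split => // i; case: (HB i).
have GT : Grect R n m' setT.
  exists (fun _ => setT), setT, setT; split => //.
  by apply/seteqP; split => v.
have := @measure_unique _ R (Vt R n m') (Grect R n m') (fun _ => setT) erefl setIG (fun _ => GT) _
   (pushforward P Y) (pushforward P (Yp c')).
move=> H; apply: (H _ Y_meas (Yp_meas c')) => //.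
- by apply/seteqP; split => // v _; exists 0%N.
- by move=> _ [B [A [S [mB ->]]]]; exact: rect_eq.
- move=> _; change (P (Y @^-1` setT) < +oo)%E.
  rewrite preimage_setT.
  by rewrite probability_setT ltry.
Qed.


Lemma flip_flip b1 b2 y : flip b1 (flip b2 y) = flip (b1 == b2) y.
Proof.
rewrite /flip addrK mulrA; congr (_ * _ + _).
by case: b1; case: b2; rewrite /sgn /= ?mul1r ?mulN1r ?opprK.
Qed.

Lemma flip_true y : flip true y = y.
Proof. by rewrite /flip /sgn mul1r subrK. Qed.

Lemma sign_at_lift (a : Fa n m') i (c' : 'I_m') :
  @sign_at n m'.+1 a i (lift ord0 c') = a (i, c').
Proof. by rewrite /sign_at lift0 /= valK. Qed.

Lemma resample_Yp c' t (j : 'I_m'.+1) :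
  @resample R n m'.+1 (Yp c' t).1 (Yp c' t).2.1 mu j =
  @resample R n m'.+1 (fun i => X i t) (alpha t) mu (sig c' j).
Proof.
apply/funext => i; rewrite /resample /=.
case: (unliftP ord0 j) => [j'|] ->; last first.
  by rewrite /sig tpermL /= sign_at_lift.
rewrite lift0 /=.
case: (eqVneq j' c') => [->|jc].
  by rewrite /sig tpermR /= sign_at_lift ffunE /= eqxx -/(flip _ _) flip_flip eqxx flip_true.
rewrite /sig tpermD; last 2 first.
- exact: neq_lift.
- by rewrite (inj_eq (@lift_inj _ ord0)) eq_sym.
rewrite lift0 /= !sign_at_lift ffunE /= (negbTE jc) -/(flip _ _) flip_flip -/(flip _ _).
by congr flip; case: (alpha t (i, j')); case: (alpha t (i, c')).
Qed.

Lemma rk_Yp c' t :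
  rk (@Sstat R n k m'.+1 (Yp c' t).1 (Yp c' t).2.1 mu) (Yp c' t).2.2 ord0 =
  rk (@Sstat R n k m'.+1 (Y t).1 (Y t).2.1 mu) (Y t).2.2 (lift ord0 c').
Proof.
have -> : @Sstat R n k m'.+1 (Yp c' t).1 (Yp c' t).2.1 mu =
    @Sstat R n k m'.+1 (Y t).1 (Y t).2.1 mu \o sig c'.
  by apply/funext => j; rewrite /Sstat /= resample_Yp.
by rewrite rk_perm /sig tpermL.
Qed.


Lemma main_count r : (1 <= r <= m'.+1)%N ->
  P [set t | (rk (@Sstat R n k m'.+1 (fun i => X i t) (alpha t) mu) (pi t) ord0 <= m'.+1 - r)%N]
  = (1 - r%:R / m'.+1%:R)%:E.
Proof.
move=> /andP [r1 rM].
set M := m'.+1; set q := (M - r)%N.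
pose Ec (c : 'I_M) := [set v : Vt R n m' | (rk (@Sstat R n k m'.+1 v.1 v.2.1 mu) v.2.2 c <= q)%N].
have HE c : measurable (Ec c) by exact: (@rk_meas R n m' k mu c (fun x => (x <= q)%N)).
have Hpre c : measurable (Y @^-1` Ec c).
  by rewrite -[X in measurable X]setTI; apply: Y_meas => //.
have Heq c : P (Y @^-1` Ec c) = P (Y @^-1` Ec ord0).
  case: (unliftP ord0 c) => [c'|] -> //.
  rewrite (@law_eq c' _ (HE ord0)).
  congr (P _); apply/seteqP; split => t; rewrite /preimage /Ec /=; by have := rk_Yp c' t; rewrite /= => ->.
pose rho t := [ffun c => (rk (@Sstat R n k m'.+1 (Y t).1 (Y t).2.1 mu) (Y t).2.2 c <= q)%N].
have mrho g : measurable (rho @^-1` [set g]).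
  have -> : rho @^-1` [set g] = \bigcap_(c in [set: 'I_M])
      (Y @^-1` [set v : Vt R n m' | (rk (@Sstat R n k m'.+1 v.1 v.2.1 mu) v.2.2 c <= q)%N == g c]).
    apply/seteqP; split => t /=.
      by move=> <- c _; rewrite /preimage /= ffunE.
    move=> H; apply/ffunP => c; rewrite ffunE; exact: (eqP (H c I)).
  apply: fin_bigcap_measurable; first exact: finite_finset.
  move=> c _; rewrite -[X in measurable X]setTI; apply: Y_meas => //.
  exact: (@rk_meas R n m' k mu c (fun x => (x <= q)%N == g c)).
have Hsum : (\sum_(c < M) P (Y @^-1` Ec c))%E = (1 *+ q)%E.
  under eq_bigr => c _.
    rewrite (@fin_decomp _ _ _ P _ rho _ (Hpre c) mrho).
    under eq_bigr => g _.
      have -> : Y @^-1` Ec c `&` rho @^-1` [set g] =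
          if g c then rho @^-1` [set g] else set0.
        apply/seteqP; split => t /=.
          by move=> [Ht <-]; rewrite ffunE Ht.
        case: ifP => gc //= Ht; split => //; move: gc; by rewrite -Ht ffunE.
      over.
    over.
  rewrite /= exchange_big /=.
  have -> : (\sum_(g : {ffun 'I_M -> bool}) \sum_(c < M)
       P (if g c then rho @^-1` [set g] else set0))%E =
       (\sum_(g : {ffun 'I_M -> bool}) P (rho @^-1` [set g]) *+ q)%E.
    apply: eq_bigr => g _.
    case: (pselect (exists t, rho t = g)) => [[t <-] | none].
      rewrite (eq_bigr (fun c => if rho t c then P (rho @^-1` [set rho t]) else 0)); last first.
        by move=> c _; case: ifP => _ //; rewrite measure0.
      rewrite -big_mkcond /=.
      rewrite (eq_bigl [pred c | (rk (@Sstat R n k m'.+1 (Y t).1 (Y t).2.1 mu) (Y t).2.2 c <= q)%N]); last first.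
        by move=> c; rewrite ffunE inE.
      rewrite sumr_const; congr (_ *+ _).
      exact: (@card_rk_le R M (@Sstat R n k m'.+1 (Y t).1 (Y t).2.1 mu) (Y t).2.2 q (leq_subr r M)).
    have -> : rho @^-1` [set g] = set0.
      by apply/seteqP; split => t //= Ht; apply: none; exists t.
    transitivity (0 : \bar R)%E; first by apply: big1 => c _; case: ifP => _; exact: measure0.
    by rewrite measure0; apply/esym; apply: mul0rn.
  rewrite sumrMnl; congr (_ *+ _).
  rewrite [RHS](_ : _ = P setT); last by rewrite probability_setT.
  rewrite (@fin_decomp _ _ _ P _ rho setT measurableT mrho).
  by apply: eq_bigr => g _; rewrite setTI.
have HS : (\sum_(c < M) P (Y @^-1` Ec c))%E = P (Y @^-1` Ec ord0) *+ M.
  rewrite (eq_bigr (fun _ => P (Y @^-1` Ec ord0))); last by move=> c _; exact: Heq.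
  by rewrite sumr_const card_ord.
rewrite HS in Hsum.
change (P (Y @^-1` Ec ord0) = (1 - r%:R / M%:R)%:E).
have fin : P (Y @^-1` Ec ord0) \is a fin_num.
  rewrite ge0_fin_numE ?measure_ge0 //.
  by apply: (le_lt_trans (probability_le1 _ (Hpre ord0))); exact: ltry.
move: Hsum; rewrite -(fineK fin); set p := fine _.
rewrite -EFin_natmul => Hp0.
have Hp : p *+ M = 1 *+ q by apply: EFin_inj; rewrite -Hp0 EFin_natmul.
congr EFin.
have M0 : (M%:R : R) != 0 by rewrite pnatr_eq0.
rewrite -mulr_natr in Hp.
have -> : p = q%:R / M%:R.
  by apply: (mulIf M0); rewrite mulfVK // mulr_natr Hp mul1r.
by rewrite /q natrB // mulrBl divff.
Qed.

End Prob.

Theorem corollary1 (R : realType) (d : measure_display) (T : measurableType d)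
  (P : probability T R) (n k m r : nat)
  (X : 'I_n -> T -> R)
  (alpha : T -> {ffun 'I_n * 'I_(m.-1) -> bool})
  (pi : T -> {perm 'I_m}) (mu : R) :
  (1 <= k <= n)%N -> (1 <= r <= m)%N ->
  (* measurability of all random elements *)
  (forall i, measurable_fun setT (X i)) ->
  (forall A, measurable (alpha @^-1` A)) ->
  (forall S, measurable (pi @^-1` S)) ->
  (* mutual independence of X_1, ..., X_n, the signs, and the permutation *)
  (forall (B : 'I_n -> set R) (A : set {ffun 'I_n * 'I_(m.-1) -> bool})
          (S : set {perm 'I_m}),
     (forall i, measurable (B i)) ->
     P ((\bigcap_i (X i @^-1` B i)) `&` (alpha @^-1` A) `&` (pi @^-1` S)) =
     ((\prod_(i < n) P (X i @^-1` B i)) * P (alpha @^-1` A) * P (pi @^-1` S))%E) ->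
  (* identically distributed *)
  (forall i j (B : set R), measurable B ->
     P (X i @^-1` B) = P (X j @^-1` B)) ->
  (* common distribution symmetric about mu *)
  (forall i (B : set R), measurable B ->
     P (X i @^-1` B) = P (X i @^-1` ((fun y => 2 * mu - y) @^-1` B))) ->
  (* the alpha_{i,j} are i.i.d. Rademacher: alpha is uniform on sign arrays *)
  (forall a, P (alpha @^-1` [set a]) = ((#|{ffun 'I_n * 'I_(m.-1) -> bool}|)%:R^-1)%:E) ->
  (* pi is a uniformly random permutation of {0, ..., m-1} *)
  (forall s, P (pi @^-1` [set s]) = ((m`!)%:R^-1)%:E) ->
  P [set t | (rankR k (fun i => X i t) (alpha t) (pi t) mu <= m - r)%N] =
    (1 - r%:R / m%:R)%:E.
Proof.
move=> hk hr hX ha hp hind hid hsym hua hup.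
case: m alpha pi hr ha hp hind hua hup => [|m'] alpha pi hr ha hp hind hua hup.
  by case/andP: hr => r1 r0; move: (leq_trans r1 r0).
have -> : [set t | (rankR k (fun i => X i t) (alpha t) (pi t) mu <= m'.+1 - r)%N] =
   [set t | (rk (@Sstat R n k m'.+1 (fun i => X i t) (alpha t) mu) (pi t) ord0 <= m'.+1 - r)%N].
  apply/seteqP; split => t /=; rewrite /rk;
  have -> // : #|[pred j : 'I_m'.+1 | (0 < j)%N && prec_pi (pi t) (Sstat k (fun i => X i t) (alpha t) mu) ord0 j]| =
    #|[pred j : 'I_m'.+1 | (j != ord0) && prec_pi (pi t) (Sstat k (fun i => X i t) (alpha t) mu) ord0 j]|;
  by apply: eq_card => j; rewrite !inE lt0n.
apply: (@main_count d T R P n k m' mu X alpha pi hX ha hp hind hsym) => //.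
- by move=> a b; rewrite !hua.
- by move=> a b; rewrite !hup.
Qed.
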